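(* Let $G$ be a graph of girth at least $6$ having exactly one vertex $x$ of type $2$ and no vertex of type $k$ for any $k\geq 3$. Then $G$ is almost well-covered if and only if every internal vertex of $G$ other than $x$ is of type $0$ or $1$, $N(x)\cap V(G_0)=\emptyset$, $G_0$ is well-covered, and for every independent set $I$ in $G_1$ the following hold: (a) $\alpha(G_0)=i(G_0-N(I))$ if $I\cap N(x)=\emptyset$, and (b) $\alpha(G_0)-i(G_0-N(I))\leq 1$ if $I\cap N(x)\neq\emptyset$.
   Context: All graphs are finite and simple. The girth of a graph is the length of a shortest cycle (infinite for acyclic graphs). For a graph $H$, $\alpha(H)$ is the maximum size of an independent set and $i(H)$ is the minimum size of an inclusion-maximal independent set (both $0$ for the null graph). $H$ is well-covered if $\alpha(H)=i(H)$ and almost well-covered if $\alpha(H)-i(H)=1$. $N(v)$ is the neighborhood of $v$, $N(I)=\bigcup_{v\in I}N(v)$, and $G_0-N(I)$ denotes the graph obtained from $G_0$ by deleting the vertices of $N(I)$. Types of vertices: let $U$ be the set of vertices of $G$ whose connected component is a complete graph. In $G-U$, vertices of degree $1$ are leaves and the others are internal vertices. An internal vertex adjacent to exactly $k$ leaves is of type $k$; every vertex of $U$ is of type $0$. $G_i$ denotes the subgraph of $G$ induced by all vertices of type $i$. *)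

(* Defs.v *)
(* A finite simple graph is a symmetric irreflexive relation
   e on a finite vertex type T. Subgraphs are induced subgraphs given by
   vertex sets S : {set T}. *)
From mathcomp Require Import all_boot.
Set Implicit Arguments. Unset Strict Implicit. Unset Printing Implicit Defensive.

Section Graphs.
Variables (T : finType) (e : rel T).

Definition simple_graph := symmetric e /\ irreflexive e.

Definition girth_ge6 :=
  forall s : seq T, uniq s -> cycle e s -> 3 <= size s -> 6 <= size s.

Definition independent (I : {set T}) :=
  [forall u in I, forall v in I, ~~ e u v].

Definition indep_in (S I : {set T}) := (I \subset S) && independent I.

Definition maximal_indep_in (S I : {set T}) :=
  indep_in S I && [forall v in S :\: I, exists u in I, e u v].

Definition alpha (S : {set T}) : nat :=
  \max_(I : {set T} | indep_in S I) #|I|.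

(* i(G[S]) : minimum size of a maximal independent set (one always exists,
   and each has size <= #|T|, so the default #|T| is never the answer
   except when it is attained). *)
Definition imin (S : {set T}) : nat :=
  \big[minn/#|T|]_(I : {set T} | maximal_indep_in S I) #|I|.

Definition well_covered (S : {set T}) := alpha S = imin S.
Definition almost_well_covered (S : {set T}) := alpha S - imin S = 1.

(* U: vertices whose connected component is a complete graph *)
Definition Uset : {set T} :=
  [set v | [forall u, forall w,
      (connect e v u && connect e v w && (u != w)) ==> e u w]].

Definition degGU (v : T) : nat := #|[set u | e v u & u \notin Uset]|.

Definition is_leaf (v : T) := (v \notin Uset) && (degGU v == 1).
Definition is_internal (v : T) := (v \notin Uset) && (degGU v != 1).

Definition nleaves (v : T) : nat := #|[set u | e v u & is_leaf u]|.

Definition is_type (k : nat) (v : T) :=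
  ((v \in Uset) && (k == 0)) || (is_internal v && (nleaves v == k)).

Definition Vtype (k : nat) : {set T} := [set v | is_type k v].

Definition nbhd (v : T) : {set T} := [set u | e v u].
Definition nbhd_set (I : {set T}) : {set T} := [set u | [exists v in I, e v u]].

End Graphs.

(* Main.v *)
Require Import Defs.
From mathcomp Require Import all_boot zify.
Set Implicit Arguments. Unset Strict Implicit. Unset Printing Implicit Defensive.

Section Gen.
Variables (T : finType) (e : rel T).
Hypothesis sym : symmetric e.
Hypothesis irr : irreflexive e.

Lemma indepP (I : {set T}) :
  reflect (forall u v, u \in I -> v \in I -> ~~ e u v) (independent e I).
Proof.
apply: (iffP forall_inP) => [H u v uI vI | H u uI].
  by move/forall_inP: (H u uI); apply.
by apply/forall_inP => v vI; apply: H.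
Qed.

Lemma indep_sub (A B : {set T}) : A \subset B -> independent e B -> independent e A.
Proof.
move=> AB /indepP H; apply/indepP => u v uA vA; apply: H; exact: (subsetP AB).
Qed.

Lemma indep_add (S K : {set T}) v : indep_in e S K -> v \in S ->
  (forall u, u \in K -> ~~ e u v) -> indep_in e S (v |: K).
Proof.
case/andP=> KS /indepP iK vS nb; apply/andP; split.
  by apply/subsetP => y; rewrite in_setU1 => /predU1P[->|/(subsetP KS)].
apply/indepP => a b; rewrite !in_setU1 => /predU1P[->|aK] /predU1P[->|bK].
- by rewrite irr.
- by rewrite sym; apply: nb.
- exact: nb.
- exact: iK.
Qed.

Lemma alpha_ge (S K : {set T}) : indep_in e S K -> #|K| <= alpha e S.
Proof. by move=> H; apply: (leq_bigmax_cond K H). Qed.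

Lemma alpha_le_card (S : {set T}) : alpha e S <= #|T|.
Proof. by apply/bigmax_leqP => K _; apply: max_card. Qed.

Lemma alpha_mono (S S' : {set T}) : S \subset S' -> alpha e S <= alpha e S'.
Proof.
move=> SS; apply/bigmax_leqP => K /andP[KS iK]; apply: alpha_ge.
by rewrite /indep_in iK (subset_trans KS SS).
Qed.

Lemma alpha_attained (S : {set T}) : exists K, indep_in e S K /\ #|K| = alpha e S.
Proof.
have P0 : indep_in e S set0.
  by rewrite /indep_in sub0set; apply/indepP => u v; rewrite inE.
exists [arg max_(K > set0 | indep_in e S K) #|K|].
case: arg_maxnP => // K HK Hmax; split => //.
apply/eqP; rewrite eqn_leq alpha_ge //=; apply/bigmax_leqP => K' HK'; exact: Hmax.
Qed.

Lemma maximal_of_big (S K : {set T}) : indep_in e S K ->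
  (forall K', indep_in e S K' -> K \subset K' -> #|K'| <= #|K|) ->
  maximal_indep_in e S K.
Proof.
move=> iK Hb; rewrite /maximal_indep_in iK /=; apply/forall_inP => v.
rewrite in_setD => /andP[vK vS]; apply/existsP.
case: (boolP [exists u, (u \in K) && e u v]) => [/existsP[u /andP[uK uv]]|/existsPn H].
  by exists u; rewrite uK.
have nb : forall u, u \in K -> ~~ e u v by move=> u uK; move: (H u); rewrite uK.
by have := Hb (v |: K) (indep_add iK vS nb) (subsetUr _ _); rewrite cardsU1 vK add1n ltnn.
Qed.

Lemma ext_maximal (S A : {set T}) : indep_in e S A ->
  exists K, maximal_indep_in e S K /\ A \subset K.
Proof.
move=> iA.
exists [arg max_(K > A | indep_in e S K && (A \subset K)) #|K|].
case: arg_maxnP; first by rewrite iA subxx.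
move=> K /andP[iK AK] Hmax; split => //.
apply: maximal_of_big => // K' iK' KK'.
by apply: Hmax; rewrite iK' (subset_trans AK KK').
Qed.

Lemma bigmin_le_seq (s : seq {set T}) d (F : {set T} -> nat) K :
  K \in s -> \big[minn/d]_(i <- s) F i <= F K.
Proof.
elim: s => // a s IH; rewrite inE big_cons => /predU1P[->|Ks].
  exact: geq_minl.
exact: leq_trans (geq_minr _ _) (IH Ks).
Qed.

Lemma imin_le (S K : {set T}) : maximal_indep_in e S K -> imin e S <= #|K|.
Proof.
move=> H; rewrite /imin -big_filter; apply: bigmin_le_seq.
by rewrite mem_filter H mem_index_enum.
Qed.

Lemma imin_ge (S : {set T}) b : b <= #|T| ->
  (forall K, maximal_indep_in e S K -> b <= #|K|) -> b <= imin e S.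
Proof.
move=> bT H; rewrite /imin; elim/big_ind: _ => //.
  by move=> m n bm bn; rewrite leq_min bm bn.
Qed.

Lemma imin_le_alpha (S : {set T}) : imin e S <= alpha e S.
Proof.
have P0 : indep_in e S set0.
  by rewrite /indep_in sub0set; apply/indepP => u v; rewrite inE.
have [K [mK _]] := ext_maximal P0.
apply: leq_trans (imin_le mK) _; apply: alpha_ge; by case/andP: mK.
Qed.

Lemma alpha_max_maximal (S K : {set T}) : indep_in e S K -> alpha e S <= #|K| ->
  maximal_indep_in e S K.
Proof.
move=> iK aK; apply: maximal_of_big => // K' iK' _.
exact: leq_trans (alpha_ge iK') aK.
Qed.

Lemma edge_neq u v : e u v -> u != v.
Proof. by apply: contraTneq => ->; rewrite irr. Qed.

End Gen.

Section Struct.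
Variables (T : finType) (e : rel T) (x : T).
Hypothesis sym : symmetric e.
Hypothesis irr : irreflexive e.
Hypothesis girth : girth_ge6 e.
Hypothesis Hx : is_type e 2 x.
Hypothesis Hux : forall y, is_type e 2 y -> y = x.
Hypothesis Hk : forall (k : nat) y, 3 <= k -> ~~ is_type e k y.

Local Notation U := (Uset e).
Local Notation V0 := (Vtype e 0).
Local Notation V1 := (Vtype e 1).
Local Notation N := (nbhd e).

Definition sup (u : T) : T := odflt u [pick w | e u w].

Lemma Uclosed u v : e u v -> (u \in U) = (v \in U).
Proof.
move=> uv.
have csym := sym_connect_sym sym.
have E : forall y, connect e u y = connect e v y.
  move=> y; apply/idP/idP => H.
    apply: connect_trans H; rewrite csym; exact: connect1.
  apply: connect_trans H; exact: connect1.
rewrite !inE; apply: eq_forallb => a; apply: eq_forallb => b; by rewrite !E.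
Qed.

Lemma degN v : v \notin U -> degGU e v = #|N v|.
Proof.
move=> vU; rewrite /degGU /nbhd; apply: eq_card => w.
case vw: (e v w); last by rewrite !inE vw.
have := Uclosed vw; move: vU; rewrite !inE vw /= => vU <-; exact: vU.
Qed.

Lemma leaf_nb u : is_leaf e u -> N u = [set sup u].
Proof.
case/andP=> uU /eqP; rewrite degN // => /eqP /cards1P [w Hw].
rewrite Hw; congr [set _]; rewrite /sup.
case: pickP => [w0 uw0|H] /=.
  have : w0 \in N u by rewrite inE.
  by rewrite Hw inE => /eqP.
have : w \in N u by rewrite Hw set11.
by rewrite inE H.
Qed.

Lemma leaf_adj u y : is_leaf e u -> e u y = (y == sup u).
Proof.
move=> lu; have := leaf_nb lu => /setP /(_ y); by rewrite !inE.
Qed.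

Lemma leaf_sup u : is_leaf e u -> e u (sup u).
Proof. by move=> lu; rewrite leaf_adj. Qed.

Lemma leaf_notU u : is_leaf e u -> u \notin U.
Proof. by case/andP. Qed.

Lemma leaf_not_internal u : is_leaf e u -> ~~ is_internal e u.
Proof. by case/andP=> _ d; rewrite /is_internal d andbF. Qed.

Lemma sup_notU u : is_leaf e u -> sup u \notin U.
Proof. by move=> lu; rewrite -(Uclosed (leaf_sup lu)) leaf_notU. Qed.

Lemma sup_not_leaf u : is_leaf e u -> ~~ is_leaf e (sup u).
Proof.
move=> lu; apply/negP => ls.
have us : sup (sup u) = u.
  by apply/esym/eqP; rewrite -leaf_adj // sym leaf_sup.
set A := [set u; sup u].
have clA : closed e (mem A).
  apply: (intro_closed (sym_connect_sym sym)) => a b ab; rewrite !inE.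
  case/orP => /eqP Ea; subst a.
    by move: ab; rewrite leaf_adj // => ->; rewrite orbT.
  by move: ab; rewrite leaf_adj // us => ->.
have inA y : connect e u y -> y \in A.
  move=> cy; rewrite -(closed_connect clA cy); exact: setU11.
have : u \in U.
  rewrite inE; apply/forallP => a; apply/forallP => b; apply/implyP.
  case/andP => /andP [/inA aA /inA bA] ab.
  move: aA bA ab; rewrite !inE => /orP[]/eqP-> /orP[]/eqP->; rewrite ?eqxx //.
    by rewrite leaf_sup.
  by rewrite sym leaf_sup.
by rewrite (negbTE (leaf_notU lu)).
Qed.

Lemma sup_internal u : is_leaf e u -> is_internal e (sup u).
Proof.
move=> lu; have := sup_not_leaf lu; rewrite /is_leaf /is_internal sup_notU //=.
Qed.

Lemma type_inv k v : is_type e k v ->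
  ~~ is_leaf e v /\ (v \in U -> k = 0) /\ (v \notin U -> is_internal e v /\ nleaves e v = k).
Proof.
case/orP => [/andP[vU /eqP->]|/andP[vi /eqP<-]].
  by split; [rewrite /is_leaf vU | split => //; rewrite vU].
split; first by apply: contraTN vi => /leaf_not_internal.
have vU : v \notin U := (andP vi).1.
split; last by []. by move=> H; rewrite H in vU.
Qed.

Lemma type_uniq k k' v : is_type e k v -> is_type e k' v -> k = k'.
Proof.
move=> /type_inv [_ [h1 h2]] /type_inv [_ [h1' h2']].
case: (boolP (v \in U)) => vU; first by rewrite h1 // h1'.
by case: (h2 vU) => _ <-; case: (h2' vU).
Qed.

Lemma x_internal : is_internal e x /\ nleaves e x = 2.
Proof.
have [_ [h1 h2]] := type_inv Hx.
by case: (boolP (x \in U)) => xU; [have := h1 xU | exact: h2].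
Qed.

Lemma x_notU : x \notin U.
Proof. by case: x_internal => /andP[]. Qed.

Lemma classify v : [\/ v \in V0, v \in V1, v = x | is_leaf e v].
Proof.
case: (boolP (v \in U)) => vU.
  by apply: Or41; rewrite inE /is_type vU.
case: (boolP (is_leaf e v)) => lv; first by apply: Or44.
have vi : is_internal e v by move: lv; rewrite /is_leaf /is_internal vU.
case: (ltnP (nleaves e v) 3) => [|h].
  case En: (nleaves e v) => [|[|[|n]]] // _.
  - by apply: Or41; rewrite inE /is_type vi En orbT.
  - by apply: Or42; rewrite inE /is_type vi En orbT.
  - by apply: Or43; apply: Hux; rewrite /is_type vi En orbT.
have := Hk v h; by rewrite /is_type vi eqxx orbT.
Qed.

Lemma V0_not_leaf v : v \in V0 -> ~~ is_leaf e v.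
Proof. by rewrite inE => /type_inv[]. Qed.
Lemma V1_not_leaf v : v \in V1 -> ~~ is_leaf e v.
Proof. by rewrite inE => /type_inv[]. Qed.
Lemma x_not_leaf : ~~ is_leaf e x.
Proof. by case/type_inv: Hx. Qed.
Lemma V0V1 v : v \in V0 -> v \in V1 -> False.
Proof. by rewrite !inE => h1 h2; have := type_uniq h1 h2. Qed.
Lemma x_notV0 : x \notin V0.
Proof. by apply/negP; rewrite inE => h; have := type_uniq h Hx. Qed.
Lemma x_notV1 : x \notin V1.
Proof. by apply/negP; rewrite inE => h; have := type_uniq h Hx. Qed.

Lemma V0_no_leaf_nb v u : v \in V0 -> is_leaf e u -> ~~ e v u.
Proof.
move=> v0 lu; apply/negP => vu.
move: v0; rewrite inE => /type_inv [_ [_ h]].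
case: (boolP (v \in U)) => vU.
  by move: (leaf_notU lu); rewrite -(Uclosed vu) vU.
case: (h vU) => _ /eqP; apply/negP; rewrite /nleaves -lt0n card_gt0.
by apply/set0Pn; exists u; rewrite inE vu lu.
Qed.

Lemma sup_type u : is_leaf e u -> sup u \in V1 \/ sup u = x.
Proof.
move=> lu; case: (classify (sup u)) => h.
- by have := V0_no_leaf_nb h lu; rewrite sym leaf_sup.
- by left.
- by right.
- by move: (sup_not_leaf lu); rewrite h.
Qed.

Lemma V1_leaf v : v \in V1 -> exists u, is_leaf e u /\ sup u = v.
Proof.
rewrite inE => /type_inv [_ [h1 h2]].
have vU : v \notin U by apply/negP => /h1.
case: (h2 vU) => _ /eqP /cards1P [u Hu].
have : u \in [set u | e v u & is_leaf e u] by rewrite Hu set11.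
rewrite inE => /andP[vu lu]; exists u; split => //.
by apply/esym/eqP; rewrite -leaf_adj // sym.
Qed.

Lemma V1_leaf_uniq u u' : is_leaf e u -> is_leaf e u' -> sup u = sup u' -> sup u \in V1 -> u = u'.
Proof.
move=> lu lu' E; rewrite inE => /type_inv [_ [h1 h2]].
have vU : sup u \notin U by apply/negP => /h1.
case: (h2 vU) => _ /eqP /cards1P [w Hw].
have : u \in [set y | e (sup u) y & is_leaf e y] by rewrite inE sym leaf_sup // lu.
have : u' \in [set y | e (sup u) y & is_leaf e y] by rewrite inE E sym leaf_sup // lu'.
by rewrite Hw !inE => /eqP-> /eqP->.
Qed.

Lemma neqF (a b : T) : a != b -> ((a == b) = false) * ((b == a) = false).
Proof. by move=> /negbTE h; rewrite h eq_sym h. Qed.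

Lemma no_tri a b c : e a b -> e b c -> e c a -> False.
Proof.
move=> ab bc ca.
have := fun H : uniq [:: a; b; c] => girth H; rewrite /= !inE ab bc ca.
have [f1 g1] := neqF (edge_neq irr ab); have [f2 g2] := neqF (edge_neq irr bc).
have [f3 g3] := neqF (edge_neq irr ca).
rewrite ?f1 ?g1 ?f2 ?g2 ?f3 ?g3.
by move=> /(_ isT isT isT).
Qed.

Lemma no_c4 a b c d : e a b -> e b c -> e c d -> e d a -> a != c -> b != d -> False.
Proof.
move=> ab bc cd da ac bd.
have := fun H : uniq [:: a; b; c; d] => girth H; rewrite /= !inE ab bc cd da.
have [f1 g1] := neqF (edge_neq irr ab); have [f2 g2] := neqF (edge_neq irr bc).
have [f3 g3] := neqF (edge_neq irr cd); have [f4 g4] := neqF (edge_neq irr da).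
have [f5 g5] := neqF ac; have [f6 g6] := neqF bd.
rewrite ?f1 ?g1 ?f2 ?g2 ?f3 ?g3 ?f4 ?g4 ?f5 ?g5 ?f6 ?g6.
by move=> /(_ isT isT isT).
Qed.

Lemma no_c5 a b c d f : e a b -> e b c -> e c d -> e d f -> e f a ->
  a != c -> a != d -> b != d -> b != f -> c != f -> False.
Proof.
move=> ab bc cd df fa ac ad bd bf cf.
have := fun H : uniq [:: a; b; c; d; f] => girth H; rewrite /= !inE ab bc cd df fa.
have [f1 g1] := neqF (edge_neq irr ab); have [f2 g2] := neqF (edge_neq irr bc).
have [f3 g3] := neqF (edge_neq irr cd); have [f4 g4] := neqF (edge_neq irr df).
have [f5 g5] := neqF (edge_neq irr fa).
have [f6 g6] := neqF ac; have [f7 g7] := neqF ad; have [f8 g8] := neqF bd.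
have [f9 g9] := neqF bf; have [f0 g0] := neqF cf.
rewrite ?f1 ?g1 ?f2 ?g2 ?f3 ?g3 ?f4 ?g4 ?f5 ?g5 ?f6 ?g6 ?f7 ?g7 ?f8 ?g8 ?f9 ?g9 ?f0 ?g0.
by move=> /(_ isT isT isT).
Qed.

Definition Lx := [set u | e x u & is_leaf e u].

Lemma card_Lx : #|Lx| = 2.
Proof. by case: x_internal. Qed.

Lemma LxE u : (u \in Lx) = (is_leaf e u && (sup u == x)).
Proof.
rewrite inE; case lu: (is_leaf e u); rewrite ?andbF ?andbT //.
by rewrite sym leaf_adj // eq_sym.
Qed.

Definition LI (I : {set T}) := [set u | is_leaf e u & sup u \in V1 :\: I].

Lemma card_LI I : #|LI I| = #|V1 :\: I|.
Proof.
have -> : V1 :\: I = sup @: LI I.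
  apply/setP => v; apply/idP/imsetP.
    move=> vI; have := vI; rewrite in_setD => /andP[_ v1].
    have [u [lu su]] := V1_leaf v1.
    by exists u => //; rewrite /LI in_set lu su.
  by case=> u; rewrite /LI in_set => /andP[_ h] ->.
apply/esym/card_in_imset => u u'; rewrite /LI !in_set => /andP[lu /andP[_ s1]] /andP[lu' _] E.
by apply: V1_leaf_uniq => //; rewrite inE.
Qed.

Definition hh (u : T) := if is_leaf e u then sup u else u.

Lemma alpha_ub (J : {set T}) : independent e J -> #|J| <= alpha e V0 + #|V1| + 2.
Proof.
move=> /indepP iJ.
rewrite -(cardsID V0 J) -addnA leq_add //.
  by apply: alpha_ge; rewrite /indep_in subsetIr; apply/indepP => u v /setIP[uJ _] /setIP[vJ _]; apply: iJ.
set X := x |: Lx.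
rewrite -(cardsID X (J :\: V0)) addnC leq_add //.
  set B := _ :\: X.
  have HB u : u \in B -> u \in J /\ (u \in V1 \/ (is_leaf e u /\ sup u \in V1)).
    rewrite /B !in_setD in_setU1 => /andP[nX /andP[n0 uJ]]; split => //.
    case: (classify u) => h.
    - by rewrite h in n0.
    - by left.
    - by rewrite h eqxx in nX.
    - right; split => //; case: (sup_type h) => // sx.
      by move: nX; rewrite LxE h sx eqxx orbT.
  rewrite -(card_in_imset (f:=hh)); last first.
    move=> u u' /HB [uJ hu] /HB [u'J hu']; rewrite /hh.
    case lu: (is_leaf e u); case lu': (is_leaf e u').
    - move=> E; case: hu => [/V1_not_leaf|[_ s1]]; first by rewrite lu.
      exact: V1_leaf_uniq.
    - move=> E; have := iJ _ _ uJ u'J; by rewrite -E leaf_sup.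
    - move=> E; have := iJ _ _ u'J uJ; by rewrite E leaf_sup.
    - by [].
  apply: subset_leq_card; apply/subsetP => v /imsetP [u /HB [_ hu] ->]; rewrite /hh.
  case: hu => [h|[lu s1]]; last by rewrite lu.
  by rewrite (negbTE (V1_not_leaf h)).
case: (boolP (x \in J)) => xJ.
  apply: (@leq_trans 1) => //; apply/card_le1P => u uC.
  have sub : forall w, w \in (J :\: V0) :&: X -> w = x.
    move=> w; rewrite in_setI in_setD in_setU1 => /andP[/andP[_ wJ]] /orP[/eqP//|].
    rewrite /Lx in_set => /andP[xw _].
    by have := iJ _ _ xJ wJ; rewrite xw.
  move=> w /=; apply/idP/eqP => [/sub->|->]; [by rewrite (sub _ uC) | exact: uC].
rewrite -card_Lx; apply: subset_leq_card; apply/subsetP => w.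
rewrite in_setI in_setD in_setU1 => /andP[/andP[_ wJ]] /orP[/eqP E|//].
by rewrite -E wJ in xJ.
Qed.

Lemma disj_by (A B : {set T}) : (forall u, u \in A -> u \in B -> False) -> A :&: B = set0.
Proof.
move=> H; apply/setP => u; rewrite inE in_set0; apply/negP => /andP[a b]; exact: H a b.
Qed.

Lemma cardsU_disj (A B : {set T}) : A :&: B = set0 -> #|A :|: B| = #|A| + #|B|.
Proof. by move=> H; rewrite cardsU H cards0 subn0. Qed.

Lemma NSP (I : {set T}) y : reflect (exists2 v, v \in I & e v y) (y \in nbhd_set e I).
Proof. rewrite /nbhd_set in_set; exact: exists_inP. Qed.

Lemma LIP I u : (u \in LI I) = [&& is_leaf e u, sup u \notin I & sup u \in V1].
Proof. by rewrite /LI in_set in_setD. Qed.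

Section Build.
Variables (I K : {set T}) (b : bool).
Hypothesis iI : indep_in e V1 I.
Hypothesis bx : b -> I :&: N x = set0.
Let P := if b then [set x] else Lx.
Let S := if b then V0 :\: nbhd_set e I :\: N x else V0 :\: nbhd_set e I.
Hypothesis mK : maximal_indep_in e S K.
Let J := I :|: LI I :|: P :|: K.

Lemma KS : K \subset S.
Proof. by case/andP: mK => /andP[]. Qed.

Lemma K0 u : u \in K -> [/\ u \in V0, u \notin nbhd_set e I & (b -> u \notin N x)].
Proof.
move=> /(subsetP KS); rewrite /S; case: b => /=; rewrite !in_setD.
  by case/and3P => -> -> ->.
by case/andP => -> ->.
Qed.

Lemma I1 u : u \in I -> u \in V1.
Proof. by case/andP: iI => /subsetP H _ /H. Qed.

Lemma Pmem u : u \in P -> if b then u = x else is_leaf e u /\ sup u = x.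
Proof.
rewrite /P; case: b; first by rewrite inE => /eqP.
by rewrite LxE => /andP[-> /eqP].
Qed.

Lemma Jmem u : u \in J -> [\/ u \in I, u \in LI I, u \in P | u \in K].
Proof.
rewrite /J !in_setU => /orP[/orP[/orP[]|]|]; [exact: Or41 | exact: Or42 | exact: Or43 | exact: Or44].
Qed.

Lemma Jleaf u : u \in J -> is_leaf e u -> sup u \notin J.
Proof.
move=> uJ lu; apply/negP => /Jmem sJ.
have ns : ~~ is_leaf e (sup u) := sup_not_leaf lu.
case/Jmem: uJ => [uI|uL|uP|uK].
- by move: (V1_not_leaf (I1 uI)); rewrite lu.
- move: uL; rewrite LIP => /and3P[_ nI s1].
  case: sJ => [sI|sL|sP|/K0[s0 _ _]].
  + by rewrite sI in nI.
  + by move: sL; rewrite LIP (negbTE ns).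
  + move: (Pmem sP); case: b => [E|[ls _]]; last by rewrite ls in ns.
    by move: s1; rewrite E (negbTE x_notV1).
  + exact: V0V1 s0 s1.
- case: (boolP b) => bb.
    by move: (Pmem uP); rewrite bb => E; rewrite E (negbTE x_not_leaf) in lu.
  move: (Pmem uP); rewrite (negbTE bb) => -[_ E].
  rewrite E in ns sJ.
  case: sJ => [/I1|sL|sP|/K0[s0 _ _]].
  + by rewrite (negbTE x_notV1).
  + by move: sL; rewrite LIP (negbTE ns).
  + by move: (Pmem sP); rewrite (negbTE bb) => -[ls _]; rewrite ls in ns.
  + by move: x_notV0; rewrite s0.
- by case: (K0 uK) => /V0_not_leaf; rewrite lu.
Qed.

Lemma Jnonleaf u : u \in J -> ~~ is_leaf e u -> [\/ u \in I, b /\ u = x | u \in K].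
Proof.
move=> /Jmem [uI|uL|uP|uK] nl.
- by apply: Or31.
- by move: uL; rewrite LIP (negbTE nl).
- move: (Pmem uP); case: b => [E|[lu _]]; first by apply: Or32.
  by rewrite lu in nl.
- by apply: Or33.
Qed.

Lemma J_indep : independent e J.
Proof.
apply/indepP => u v uJ vJ.
case: (boolP (is_leaf e u)) => lu.
  rewrite leaf_adj //; apply/negP => /eqP E.
  by move: (Jleaf uJ lu); rewrite -E vJ.
case: (boolP (is_leaf e v)) => lv.
  rewrite sym leaf_adj //; apply/negP => /eqP E.
  by move: (Jleaf vJ lv); rewrite -E uJ.
have iI' := andP iI; case: iI' => _ /indepP iI'.
have iK := andP (andP mK).1; case: iK => _ /indepP iK.
have NIx : forall w, w \in I -> b -> ~~ e x w.
  move=> w wI bb; apply/negP => xw.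
  have : w \in I :&: N x by rewrite inE wI inE xw.
  by rewrite (bx bb) inE.
case: (Jnonleaf uJ lu) => [uI|[bb ->]|uK]; case: (Jnonleaf vJ lv) => [vI|[bb' ->]|vK].
- exact: iI'.
- by rewrite sym NIx.
- apply/negP => uv; case: (K0 vK) => _ /negP H _; apply: H; apply/NSP; by exists u.
- exact: NIx.
- by rewrite irr.
- by case: (K0 vK) => _ _ /(_ bb); rewrite inE.
- apply/negP => uv; case: (K0 uK) => _ /negP H _; apply: H; apply/NSP; exists v => //; by rewrite sym.
- by case: (K0 uK) => _ _ /(_ bb'); rewrite inE sym.
- exact: iK.
Qed.

Lemma J_max : maximal_indep_in e [set: T] J.
Proof.
rewrite /maximal_indep_in /indep_in subsetT J_indep /=.
apply/forall_inP => y; rewrite in_setD in_setT andbT => yJ.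
have inJ : forall w, w \in I -> w \in J by move=> w wI; rewrite /J !in_setU wI.
have inL : forall w, w \in LI I -> w \in J by move=> w wI; rewrite /J !in_setU wI orbT.
have inP : forall w, w \in P -> w \in J by move=> w wI; rewrite /J !in_setU wI orbT.
have inK : forall w, w \in K -> w \in J by move=> w wI; rewrite /J !in_setU wI orbT.
case: (classify y) => [y0|y1|yx|ly].
- case: (boolP (y \in nbhd_set e I)) => [/NSP [v vI vy]|nN].
    by apply/exists_inP; exists v => //; apply: inJ.
  case: (boolP (b && (y \in N x))) => [/andP[bb yN]|nb].
    apply/exists_inP; exists x; last by move: yN; rewrite inE.
    by apply: inP; rewrite /P bb set11.
  have yS : y \in S :\: K.
    rewrite in_setD; apply/andP; split; first by apply/negP => /inK; rewrite (negbTE yJ).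
    rewrite /S; move: nb; case: b => /=; rewrite !in_setD ?nN ?y0 //.
    by move=> ->.
  case/andP: mK => _ /forall_inP /(_ y yS) /exists_inP [u uK uy].
  by apply/exists_inP; exists u => //; apply: inK.
- have yI : y \notin I by apply/negP => /inJ; rewrite (negbTE yJ).
  have [l [ll sl]] := V1_leaf y1.
  apply/exists_inP; exists l; last by rewrite -sl leaf_sup.
  by apply: inL; rewrite LIP ll sl yI y1.
- move: yJ; rewrite yx => xJ.
  have bF : b = false.
    by move: xJ; rewrite /J /P; case: b => //; rewrite !in_setU set11 orbT.
  have : 0 < #|Lx| by rewrite card_Lx.
  rewrite card_gt0 => /set0Pn [l lL].
  apply/exists_inP; exists l; first by apply: inP; rewrite /P bF.
  by move: lL; rewrite LxE => /andP[ll /eqP <-]; rewrite leaf_sup.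
- case: (sup_type ly) => [s1|sx].
    case: (boolP (sup y \in I)) => sI.
      by apply/exists_inP; exists (sup y); [apply: inJ | rewrite sym leaf_sup].
    by move: yJ; rewrite (inL y) // LIP ly sI s1.
  case: (boolP b) => bb.
    apply/exists_inP; exists x; first by apply: inP; rewrite /P bb set11.
    by rewrite -sx sym leaf_sup.
  by move: yJ; rewrite (inP y) //; rewrite /P (negbTE bb) LxE ly sx eqxx.
Qed.

Lemma J_card : #|J| = #|V1| + (if b then 1 else 2) + #|K|.
Proof.
have IV : I \subset V1 by case/andP: iI.
rewrite /J cardsU_disj; last first.
  apply: disj_by => u + uK; case: (K0 uK) => u0 _ _.
  rewrite !in_setU => /orP[/orP[/I1 u1|]|uP].
  - exact: V0V1 u0 u1.
  - by rewrite LIP (negbTE (V0_not_leaf u0)).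
  - move: (Pmem uP); case: b => [E|[lu _]]; first by rewrite E (negbTE x_notV0) in u0.
    by move: (V0_not_leaf u0); rewrite lu.
rewrite cardsU_disj; last first.
  apply: disj_by => u + uP; rewrite !in_setU => /orP[/I1 u1|uL].
  - move: (Pmem uP); case: b => [E|[lu _]]; first by rewrite E (negbTE x_notV1) in u1.
    by move: (V1_not_leaf u1); rewrite lu.
  - move: uL; rewrite LIP => /and3P[ll _ s1].
    move: (Pmem uP); case: b => [E|[_ E]].
      by rewrite E (negbTE x_not_leaf) in ll.
    by rewrite E (negbTE x_notV1) in s1.
rewrite cardsU_disj; last first.
  apply: disj_by => u /I1 u1; rewrite LIP (negbTE (V1_not_leaf u1)).
by [].
rewrite card_LI -(cardsID I V1) (setIidPr IV).
congr (_ + _ + _); rewrite /P; case: b => //; [exact: cards1 | exact: card_Lx].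
Qed.

End Build.

Lemma NS0 : nbhd_set e set0 = set0.
Proof. by apply/setP => y; rewrite in_set0; apply/NSP => -[v]; rewrite in_set0. Qed.

Lemma alpha_lb : alpha e V0 + #|V1| + 2 <= alpha e [set: T].
Proof.
have [K0 [iK0 cK0]] := alpha_attained e V0.
have mK0 : maximal_indep_in e V0 K0 by apply: alpha_max_maximal => //; rewrite cK0.
have iI : indep_in e V1 set0 by rewrite /indep_in sub0set; apply/indepP => u v; rewrite in_set0.
have mK : maximal_indep_in e (if false then V0 :\: nbhd_set e set0 :\: N x else V0 :\: nbhd_set e set0) K0.
  by rewrite /= NS0 setD0.
have bx : false -> set0 :&: N x = set0 by [].
have := J_max iI bx mK.
case/andP => /andP[_ iJ] _.
have := alpha_ge (S:=[set: T]) (K:=set0 :|: LI set0 :|: Lx :|: K0) (e:=e).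
rewrite /indep_in subsetT iJ => /(_ isT).
have := J_card (b:=false) iI mK; rewrite /= => ->.
by rewrite cK0 [alpha e V0 + _]addnC -addnA [2 + _]addnC addnA.
Qed.

Lemma V0_not_leaf' u : is_leaf e u -> u \notin V0.
Proof. by move=> lu; apply/negP => /V0_not_leaf; rewrite lu. Qed.

Lemma domJ J y : maximal_indep_in e [set: T] J -> y \notin J -> exists2 u, u \in J & e u y.
Proof.
case/andP => _ /forall_inP /(_ y); rewrite in_setD in_setT andbT => H /H.
by case/exists_inP => u uJ uy; exists u.
Qed.

Lemma LB J :
  N x :&: V0 = set0 ->
  (forall I, indep_in e V1 I -> I :&: N x = set0 -> alpha e V0 <= imin e (V0 :\: nbhd_set e I)) ->
  (forall I, indep_in e V1 I -> alpha e V0 <= imin e (V0 :\: nbhd_set e I) + 1) ->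
  maximal_indep_in e [set: T] J -> alpha e V0 + #|V1| + 1 <= #|J|.
Proof.
move=> c2 ha hb mJ.
have iJ : independent e J by case/andP: mJ => /andP[].
move/indepP: (iJ) => iJ'.
set I := J :&: V1; set K := J :&: V0.
have iI : indep_in e V1 I by rewrite /indep_in subsetIr (indep_sub (subsetIl _ _) iJ).
have mK : maximal_indep_in e (V0 :\: nbhd_set e I) K.
  rewrite /maximal_indep_in /indep_in (indep_sub (subsetIl _ _) iJ) andbT.
  apply/andP; split.
    apply/subsetP => k; rewrite in_setI => /andP[kJ k0]; rewrite in_setD k0 andbT.
    apply/negP => /NSP [v]; rewrite in_setI => /andP[vJ _] vk.
    by have := iJ' _ _ vJ kJ; rewrite vk.
  apply/forall_inP => y; rewrite !in_setD in_setI => /andP[yK /andP[yN y0]].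
  have yJ : y \notin J by move: yK; rewrite y0 andbT.
  have [u uJ uy] := domJ mJ yJ.
  apply/exists_inP; exists u => //; rewrite in_setI uJ /=.
  case: (classify u) => [//|u1|ux|lu].
  - by move: yN; have -> // : y \in nbhd_set e I; apply/NSP; exists u => //; rewrite in_setI uJ.
  - have : y \in N x :&: V0 by rewrite in_setI y0 andbT inE -ux.
    by rewrite c2 in_set0.
  - by move: (V0_no_leaf_nb y0 lu); rewrite sym uy.
have Kge := imin_le mK.
rewrite -(cardsID V0 J) -/K.
set X := x |: Lx.
rewrite -(cardsID X (J :\: V0)).
set B := _ :\: X; set C := _ :&: X.
have BV : #|V1| <= #|B|.
  apply: leq_trans (leq_imset_card hh B); apply: subset_leq_card; apply/subsetP => v v1.
  have nx : v != x by apply/negP => /eqP E; move: x_notV1; rewrite -E v1.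
  have nLx : v \notin Lx by rewrite LxE (negbTE (V1_not_leaf v1)).
  case: (boolP (v \in J)) => vJ.
    apply/imsetP; exists v; last by rewrite /hh (negbTE (V1_not_leaf v1)).
    rewrite /B !in_setD in_setU1 (negbTE nx) (negbTE nLx) vJ andbT /=.
    by apply/negP => v0; exact: V0V1 v0 v1.
  have [l [ll sl]] := V1_leaf v1.
  have lJ : l \in J.
    case: (boolP (l \in J)) => // lJ; have [u uJ ul] := domJ mJ lJ.
    by move: ul; rewrite sym leaf_adj // sl => /eqP E; rewrite -E uJ in vJ.
  apply/imsetP; exists l; last by rewrite /hh ll.
  rewrite /B !in_setD in_setU1 lJ (negbTE (V0_not_leaf' ll)) LxE ll sl (negbTE nx) andbT /=.
  rewrite orbF andbT; apply/negP => /eqP E; rewrite E in ll.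
  by move: x_not_leaf; rewrite ll.
case: (boolP (x \in J)) => xJ.
  have xC : x \in C by rewrite /C in_setI in_setD in_setU1 eqxx xJ andbT orTb andbT; apply/negP => /(subsetP (subxx _)); rewrite (negbTE x_notV0).
  have Ix : I :&: N x = set0.
    apply/setP => u; rewrite in_set0 !in_setI inE; apply/negP => /andP[/andP[uJ _] xu].
    by have := iJ' _ _ xJ uJ; move: xu; rewrite inE => ->.
  have := ha I iI Ix => a0.
  have C1 : 0 < #|C| by rewrite card_gt0; apply/set0Pn; exists x.
  have hK := leq_trans a0 Kge. lia.
have LC : Lx \subset C.
  apply/subsetP => l lL; move: (lL); rewrite LxE => /andP[ll /eqP sl].
  have lJ : l \in J.
    case: (boolP (l \in J)) => // lJ; have [u uJ ul] := domJ mJ lJ.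
    by move: ul; rewrite sym leaf_adj // sl => /eqP E; rewrite -E uJ in xJ.
  by rewrite /C in_setI in_setD in_setU1 lL orbT lJ andbT (negbTE (V0_not_leaf' ll)).
have C2 : 2 <= #|C| by rewrite -card_Lx subset_leq_card.
have := hb I iI => b0.
have : alpha e V0 <= #|K| + 1 by apply: leq_trans b0 _; rewrite leq_add2r.
move=> h.
lia.
Qed.

Lemma a_from_HJ (HJ : forall J, maximal_indep_in e [set: T] J -> alpha e V0 + #|V1| + 1 <= #|J|)
  I K : indep_in e V1 I -> I :&: N x = set0 ->
  maximal_indep_in e (V0 :\: nbhd_set e I :\: N x) K -> alpha e V0 <= #|K|.
Proof.
move=> iI Ix mK.
have mK' : maximal_indep_in e (if true then V0 :\: nbhd_set e I :\: N x else V0 :\: nbhd_set e I) K by [].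
have := HJ _ (J_max (b:=true) iI (fun _ => Ix) mK').
rewrite (J_card (b:=true) iI mK') /=; lia.
Qed.

Lemma b_from_HJ (HJ : forall J, maximal_indep_in e [set: T] J -> alpha e V0 + #|V1| + 1 <= #|J|)
  I K : indep_in e V1 I ->
  maximal_indep_in e (V0 :\: nbhd_set e I) K -> alpha e V0 <= #|K| + 1.
Proof.
move=> iI mK.
have mK' : maximal_indep_in e (if false then V0 :\: nbhd_set e I :\: N x else V0 :\: nbhd_set e I) K by [].
have bx : false -> I :&: N x = set0 by [].
have := HJ _ (J_max iI bx mK').
rewrite (J_card (b:=false) iI mK') /=; lia.
Qed.

Definition zf (v w : T) := odflt w [pick z | e w z && (z != v)].

Lemma c2_from_HJ (HJ : forall J, maximal_indep_in e [set: T] J -> alpha e V0 + #|V1| + 1 <= #|J|) :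
  N x :&: V0 = set0.
Proof.
apply/setP => v; rewrite in_set0 in_setI; apply/negP => /andP[xv v0].
have exv : e x v by move: xv; rewrite inE.
have vU : v \notin U by rewrite -(Uclosed exv) x_notU.
set W := N v :&: V0.
have Wm : forall w, w \in W -> e v w /\ w \in V0.
  by move=> w; rewrite in_setI inE => /andP[-> ->].
have zfP : forall w, w \in W -> e w (zf v w) && (zf v w != v).
  move=> w /Wm [vw w0].
  have wU : w \notin U by rewrite -(Uclosed vw).
  have wi : is_internal e w by move: w0; rewrite inE => /type_inv [_ [_ /(_ wU) []]].
  rewrite /zf; case: pickP => [z -> //|H].
  have : N w = [set v].
    apply/setP => z; rewrite !inE; apply/idP/idP => [wz|/eqP->]; last by rewrite sym.
    by move: (H z); rewrite wz /= => /negbFE.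
  move=> Nw; move: wi; rewrite /is_internal wU (degN wU) Nw cards1.
  by [].
set Z := zf v @: W.
have Zm : forall z, z \in Z -> exists2 w, w \in W & z = zf v w.
  by move=> z /imsetP [w wW ->]; exists w.
have Z1 : forall w, w \in W -> zf v w != x.
  move=> w wW; have [vw w0] := Wm w wW; have /andP[wz zv] := zfP w wW.
  apply/negP => /eqP E; rewrite E in wz.
  exact: no_tri exv vw wz.
have Z2 : forall w, w \in W -> ~~ e x (zf v w).
  move=> w wW; have [vw w0] := Wm w wW; have /andP[wz zv] := zfP w wW.
  apply/negP => xz.
  apply: (no_c4 exv vw wz); first by rewrite sym.
    by apply/negP => /eqP E; move: x_notV0; rewrite E w0.
  by rewrite eq_sym.
have Z3 : forall w, w \in W -> (zf v w \in V0) || (zf v w \in V1).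
  move=> w wW; have [vw w0] := Wm w wW; have /andP[wz zv] := zfP w wW.
  case: (classify (zf v w)) => [->|->|E|lz]; rewrite ?orbT //.
    by move: (Z1 w wW); rewrite E eqxx.
  by move: (V0_no_leaf_nb w0 lz); rewrite wz.
have Z4 : forall w w', w \in W -> w' \in W -> ~~ e (zf v w) (zf v w').
  move=> w w' wW w'W.
  have [vw w0] := Wm w wW; have /andP[wz zv] := zfP w wW.
  have [vw' w0'] := Wm w' w'W; have /andP[wz' zv'] := zfP w' w'W.
  apply/negP => zz.
  case: (eqVneq w w') => [E|ww]; first by move: zz; rewrite E irr.
  case: (eqVneq (zf v w) w') => [E|zw'].
    by rewrite E in wz; apply: (no_tri vw wz); rewrite sym.
  case: (eqVneq (zf v w') w) => [E|z'w].
    by rewrite E in wz'; apply: (no_tri vw' wz'); rewrite sym.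
  have df : e (zf v w') w' by rewrite sym.
  have fa : e w' v by rewrite sym.
  have ac : v != zf v w by rewrite eq_sym.
  have ad : v != zf v w' by rewrite eq_sym.
  have bd : w != zf v w' by rewrite eq_sym.
  exact: (no_c5 vw wz zz df fa ac ad bd ww zw').
have iZ : independent e Z.
  apply/indepP => a c /Zm [w wW ->] /Zm [w' w'W ->]; exact: Z4.
set I := Z :&: V1; set S := Z :&: V0.
have iI : indep_in e V1 I by rewrite /indep_in subsetIr (indep_sub (subsetIl _ _) iZ).
have Ix : I :&: N x = set0.
  apply/setP => z; rewrite in_set0 !in_setI; apply/negP => /andP[/andP[/Zm [w wW ->] _]].
  by rewrite inE (negbTE (Z2 w wW)).
have iS : indep_in e (V0 :\: nbhd_set e I :\: N x) S.
  rewrite /indep_in (indep_sub (subsetIl _ _) iZ) andbT; apply/subsetP => s.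
  rewrite in_setI => /andP[sZ s0]; rewrite !in_setD s0 andbT.
  apply/andP; split.
    move: sZ => /Zm [w wW ->]; rewrite inE; exact: Z2.
  apply/negP => /NSP [i]; rewrite in_setI => /andP[iZ' _] ie.
  by move/indepP: iZ => /(_ _ _ iZ' sZ); rewrite ie.
have [K [mK SK]] := ext_maximal sym irr iS.
have aK := a_from_HJ HJ iI Ix mK.
have KS : K \subset V0 :\: nbhd_set e I :\: N x by case/andP: mK => /andP[].
have iK : independent e K by case/andP: mK => /andP[].
have vK : v \notin K.
  by apply/negP => /(subsetP KS); rewrite !in_setD xv.
have iK0 : indep_in e V0 K.
  rewrite /indep_in iK andbT; apply: subset_trans KS _.
  by apply/subsetP => y; rewrite !in_setD => /andP[_ /andP[_ ->]].
have ivK : indep_in e V0 (v |: K).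
  apply: (indep_add sym irr iK0 v0).
  move=> u uK; apply/negP => uv.
  move: (subsetP KS u uK); rewrite !in_setD => /andP[_ /andP[uN u0]].
  have uW : u \in W by rewrite in_setI inE sym uv u0.
  have /andP[uz _] := zfP u uW.
  have zZ : zf v u \in Z by apply/imsetP; exists u.
  case/orP: (Z3 u uW) => [z0|z1].
    have zK : zf v u \in K by apply: (subsetP SK); rewrite in_setI zZ z0.
    by move/indepP: iK => /(_ _ _ uK zK); rewrite uz.
  move: uN; have -> // : u \in nbhd_set e I.
  by apply/NSP; exists (zf v u); [rewrite in_setI zZ z1 | rewrite sym].
have := alpha_ge ivK; rewrite cardsU1 vK add1n => h.
by have := leq_ltn_trans aK h; rewrite ltnn.
Qed.

Lemma alpha_eq : alpha e [set: T] = alpha e V0 + #|V1| + 2.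
Proof.
apply/eqP; rewrite eqn_leq alpha_lb andbT.
by apply/bigmax_leqP => J /andP[_ iJ]; apply: alpha_ub.
Qed.

Lemma dropNx (c2 : N x :&: V0 = set0) I : V0 :\: nbhd_set e I :\: N x = V0 :\: nbhd_set e I.
Proof.
apply/setP => y; rewrite [in LHS]in_setD; case: (boolP (y \in N x)) => //= yN.
apply/esym/negP; rewrite in_setD => /andP[_ y0].
have : y \in N x :&: V0 by rewrite in_setI yN y0.
by rewrite c2 in_set0.
Qed.

Lemma main_sec :
  almost_well_covered e [set: T] <->
   [/\ (forall y, is_internal e y -> y != x -> is_type e 0 y \/ is_type e 1 y),
       nbhd e x :&: Vtype e 0 = set0,
       well_covered e (Vtype e 0) &
       (forall I : {set T}, indep_in e (Vtype e 1) I ->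
          (I :&: nbhd e x = set0 ->
             alpha e (Vtype e 0) = imin e (Vtype e 0 :\: nbhd_set e I)) /\
          (I :&: nbhd e x != set0 ->
             alpha e (Vtype e 0) - imin e (Vtype e 0 :\: nbhd_set e I) <= 1))].
Proof.
have c1 : forall y, is_internal e y -> y != x -> is_type e 0 y \/ is_type e 1 y.
  move=> y yi yx; case: (classify y) => [y0|y1|E|ly].
  - by left; move: y0; rewrite inE.
  - by right; move: y1; rewrite inE.
  - by rewrite E eqxx in yx.
  - by move: (leaf_not_internal ly); rewrite yi.
have aT := alpha_eq.
have aTc := alpha_le_card e [set: T].
have a0T := alpha_le_card e V0.
have iI0 : indep_in e V1 set0 by rewrite /indep_in sub0set; apply/indepP => u v; rewrite in_set0.
rewrite /almost_well_covered /well_covered; split.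
  move=> awc.
  have HJ : forall J, maximal_indep_in e [set: T] J -> alpha e V0 + #|V1| + 1 <= #|J|.
    move=> J mJ; have := imin_le mJ; lia.
  have c2 := c2_from_HJ HJ.
  have c4 : forall I : {set T}, indep_in e V1 I ->
          (I :&: N x = set0 -> alpha e V0 = imin e (V0 :\: nbhd_set e I)) /\
          (I :&: N x != set0 -> alpha e V0 - imin e (V0 :\: nbhd_set e I) <= 1).
    move=> I iI; split.
      move=> Ix; apply/eqP; rewrite eqn_leq; apply/andP; split.
        apply: imin_ge => // K mK; apply: (a_from_HJ HJ iI Ix); by rewrite dropNx.
      apply: leq_trans (imin_le_alpha sym irr _) _; apply: alpha_mono; exact: subsetDl.
    move=> _.
    have : alpha e V0 - 1 <= imin e (V0 :\: nbhd_set e I).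
      apply: imin_ge; first by apply: leq_trans (leq_subr _ _) a0T.
      move=> K mK; have := b_from_HJ HJ iI mK; lia.
    lia.
  split => //.
  by have := (c4 set0 iI0).1 (set0I _); rewrite NS0 setD0.
case=> _ c2 wc c4.
have HJ : forall J, maximal_indep_in e [set: T] J -> alpha e V0 + #|V1| + 1 <= #|J|.
  move=> J; apply: LB => // [I iI Ix|I iI].
    by rewrite -((c4 I iI).1 Ix).
  case: (eqVneq (I :&: N x) set0) => Ix.
    by rewrite -((c4 I iI).1 Ix) leq_addr.
  have := (c4 I iI).2 Ix; lia.
have lo : alpha e V0 + #|V1| + 1 <= imin e [set: T].
  apply: imin_ge => //; lia.
have [K0 [iK0 cK0]] := alpha_attained e V0.
have mK0 : maximal_indep_in e V0 K0 by apply: alpha_max_maximal => //; rewrite cK0.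
have mK : maximal_indep_in e (if true then V0 :\: nbhd_set e set0 :\: N x else V0 :\: nbhd_set e set0) K0.
  by rewrite /= dropNx // NS0 setD0.
have := imin_le (J_max (b:=true) iI0 (fun _ => set0I _) mK).
rewrite (J_card (b:=true) iI0 mK) /= cK0 => hi.
lia.
Qed.
End Struct.

Theorem theorem16 (T : finType) (e : rel T) (x : T) :
  simple_graph e ->
  girth_ge6 e ->
  is_type e 2 x ->
  (forall y, is_type e 2 y -> y = x) ->
  (forall (k : nat) y, 3 <= k -> ~~ is_type e k y) ->
  (almost_well_covered e [set: T] <->
   [/\ (forall y, is_internal e y -> y != x -> is_type e 0 y \/ is_type e 1 y),
       nbhd e x :&: Vtype e 0 = set0,
       well_covered e (Vtype e 0) &
       (forall I : {set T}, indep_in e (Vtype e 1) I ->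
          (I :&: nbhd e x = set0 ->
             alpha e (Vtype e 0) = imin e (Vtype e 0 :\: nbhd_set e I)) /\
          (I :&: nbhd e x != set0 ->
             alpha e (Vtype e 0) - imin e (Vtype e 0 :\: nbhd_set e I) <= 1))]).
Proof.
move=> [sym irr] girth Hx Hux Hk.
exact: (main_sec sym irr girth Hx Hux Hk).
Qed.
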